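(* Let $n,k,l$ be nonnegative integers with $k+l\le n$, let $\alpha,\beta>-1$, set $\sigma=\alpha+\beta+1$, and for $i=k+l,\ldots,n$ and $h=k,\ldots,n-l$ define \[ c_{ih}=\frac{(\alpha+2l+1)_{i-k-l}}{(i-k-l)!}\binom{n}{h}^{-1}\binom{n-k-l}{h-k}\,Q_{i-k-l}(n-l-h;\,\alpha+2l,\,\beta+2k,\,n-k-l). \] Then for each fixed $h$ (and whenever the indices involved lie in the range $k+l\le i\le n$): \[ c_{k+l,h}=\binom{n}{h}^{-1}\binom{n-k-l}{h-k}, \] \[ c_{k+l+1,h}=c_{k+l,h}\left[\alpha+2l+1-\frac{(\sigma+2k+2l+1)(l+h-n)}{k+l-n}\right], \] and for $i=k+l+2,k+l+3,\ldots,n$, \[ c_{ih}=K_h(i)\,c_{i-1,h}+L(i)\,c_{i-2,h}, \] where \[ M(i)=\frac{(i-k-l-1)(n+i+\alpha+\beta)(i+k+\beta-l-1)(2i+\alpha+\beta)}{(2i+\alpha+\beta-2)(i+k+l+\alpha+\beta)(i+l+\alpha-k)(i-n-1)}, \] \[ K_h(i)=\frac{\alpha+l+i-k}{i-k-l}\left[1-M(i)-\frac{(l+h-n)(2i+\alpha+\beta-1)_2}{(i+k+l+\alpha+\beta)(\alpha+l+i-k)(i-n-1)}\right], \] \[ L(i)=\frac{(\alpha+l+i-k-1)_2}{(i-k-l-1)_2}\,M(i). \]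
   Context: Pochhammer symbol: $(a)_0=1$, $(a)_j=a(a+1)\cdots(a+j-1)$. Hahn polynomials: for a nonnegative integer $N$, $a,b>-1$ and $m=0,1,\ldots,N$, $Q_m(x;a,b,N)=\sum_{j=0}^m\frac{(-m)_j(m+a+b+1)_j(-x)_j}{j!\,(a+1)_j\,(-N)_j}$. (The numbers $c_{ih}$ are the coefficients of the modified Jacobi polynomial $J_{i,k,l}^{(\alpha,\beta)}(x)=(1-x)^lx^kR^{(\alpha+2l,\beta+2k)}_{i-k-l}(x)$ in the Bernstein basis $B^n_h(x)=\binom nh x^h(1-x)^{n-h}$, $h=k,\ldots,n-l$, where $R^{(a,b)}_m(x)=\frac{(a+1)_m}{m!}\sum_{j=0}^m\frac{(-m)_j(m+a+b+1)_j}{j!(a+1)_j}(1-x)^j$.) *)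

(* Defs.v *)
From HB Require Import structures.
From mathcomp Require Import all_boot all_order all_algebra.
Set Implicit Arguments. Unset Strict Implicit. Unset Printing Implicit Defensive.
Import Order.TTheory GRing.Theory Num.Theory.
Local Open Scope ring_scope.

Section Defs.
Variable R : realFieldType.

Definition poch (a : R) (j : nat) : R := \prod_(0 <= t < j) (a + t%:R).

Definition hahnQ (m : nat) (x a b : R) (N : nat) : R :=
  \sum_(j < m.+1)
    (poch (- m%:R) j * poch (m%:R + a + b + 1) j * poch (- x) j)
    / (j`!%:R * poch (a + 1) j * poch (- N%:R) j).

Definition cc (n k l : nat) (al be : R) (i h : nat) : R :=
  poch (al + 2 * l%:R + 1) (i - k - l) / (i - k - l)`!%:R
  * ('C(n, h)%:R)^-1 * 'C(n - k - l, h - k)%:R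
  * hahnQ (i - k - l) (n - l - h)%:R (al + 2 * l%:R) (be + 2 * k%:R) (n - k - l).

(* M(i), written with real (not truncated) arithmetic on the indices *)
Definition Mi (n k l : nat) (al be : R) (i : nat) : R :=
  let i' := i%:R in let n' := n%:R in let k' := k%:R in let l' := l%:R in
  ((i' - k' - l' - 1) * (n' + i' + al + be) * (i' + k' + be - l' - 1)
     * (2 * i' + al + be))
  / ((2 * i' + al + be - 2) * (i' + k' + l' + al + be) * (i' + l' + al - k')
     * (i' - n' - 1)).

Definition Ki (n k l : nat) (al be : R) (h i : nat) : R :=
  let i' := i%:R in let n' := n%:R in let k' := k%:R in let l' := l%:R in
  let h' := h%:R in
  (al + l' + i' - k') / (i' - k' - l')
  * (1 - Mi n k l al be i
     - (l' + h' - n') * poch (2 * i' + al + be - 1) 2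
       / ((i' + k' + l' + al + be) * (al + l' + i' - k') * (i' - n' - 1))).

Definition Li (n k l : nat) (al be : R) (i : nat) : R :=
  let i' := i%:R in let k' := k%:R in let l' := l%:R in
  poch (al + l' + i' - k' - 1) 2 / poch (i' - k' - l' - 1) 2 * Mi n k l al be i.

End Defs.

(* Main.v *)
Require Import Defs.
From HB Require Import structures.
From mathcomp Require Import all_boot all_order all_algebra.
From mathcomp Require Import zify ring lra.
Import Order.TTheory GRing.Theory Num.Theory.
Local Open Scope ring_scope.


Section Aux.
Variable R : realFieldType.

Lemma poch0 (c : R) : poch c 0 = 1.
Proof. by rewrite /poch big_geq. Qed.

Lemma poch_recr (c : R) p : poch c p.+1 = poch c p * (c + p%:R).
Proof. by rewrite /poch big_nat_recr. Qed.

Lemma poch_recl (c : R) p : poch c p.+1 = c * poch (c + 1) p.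
Proof.
rewrite /poch big_nat_recl // addr0; congr (_ * _).
by apply: eq_bigr => t _; rewrite -natr1 addrA [c + _ + 1]addrAC -addrA (addrC 1) addrA.
Qed.

Lemma poch2 (c : R) : poch c 2 = c * (c + 1).
Proof. by rewrite !poch_recr poch0 mul1r addr0. Qed.

Lemma poch_neq0 (c : R) p : (forall t, (t < p)%N -> c + t%:R != 0) -> poch c p != 0.
Proof.
elim: p => [|p IH] H; first by rewrite poch0 oner_neq0.
rewrite poch_recr mulf_neq0 ?H //; apply: IH => t tp; apply: H; lia.
Qed.

Lemma poch_negnat (m j : nat) : (m < j)%N -> poch (- m%:R : R) j = 0.
Proof.
elim: j => [//|j IH] hj; rewrite poch_recr.
case: (ltnP m j) => hmj; first by rewrite IH // mul0r.
have -> : j = m by lia.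
by rewrite addNr mulr0.
Qed.

End Aux.


Section Coef.
Variable R : realFieldType.

Definition hT (a b : R) (N m j : nat) : R :=
  poch (- m%:R) j * poch (m%:R + a + b + 1) j
  / (j`!%:R * poch (a + 1) j * poch (- N%:R) j).

Definition hA (a b : R) (N m : nat) : R :=
  let M := m.+1%:R in
  (M + a + b + 1) * (M + a + 1) * (N%:R - M) / ((2 * M + a + b + 1) * (2 * M + a + b + 2)).
Definition hC (a b : R) (N m : nat) : R :=
  let M := m.+1%:R in
  M * (M + a + b + N%:R + 1) * (M + b) / ((2 * M + a + b) * (2 * M + a + b + 1)).

Lemma coef_id (a b : R) N m j : -1 < a -> -1 < b -> (m.+2 <= N)%N -> (j <= m.+2)%N ->
  (if j is p.+1 then hT a b N m.+1 p else 0) - j%:R * hT a b N m.+1 j =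
  hA a b N m * hT a b N m.+2 j - (hA a b N m + hC a b N m) * hT a b N m.+1 j
  + hC a b N m * hT a b N m j.
Proof.
move=> ha hb hN; case: j => [_|p hp].
  by rewrite /hT !poch0 !mul1r invr1 mul0r subr0; ring.
have hm : 0 <= m%:R :> R := ler0n _ _.
have hpr : 0 <= p%:R :> R := ler0n _ _.
have e1 : poch (- (m.+2)%:R) p.+1 = - (m.+2)%:R * poch (- (m.+1)%:R : R) p.
  rewrite poch_recl; congr (_ * poch _ _).
  by rewrite -[(m.+2)%:R]natr1; ring.
have e2 : poch (- m%:R) p.+1 =
   poch (- (m.+1)%:R : R) p * (- (m.+1)%:R + p%:R) * (- (m.+1)%:R + p.+1%:R) / (- (m.+1)%:R).
  have e3 : poch (- (m.+1)%:R) p.+2 = - (m.+1)%:R * poch (- m%:R : R) p.+1.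
    rewrite poch_recl; congr (_ * poch _ _).
    by rewrite -[(m.+1)%:R]natr1; ring.
  have nz : - (m.+1)%:R != 0 :> R by rewrite oppr_eq0 pnatr_eq0.
  by rewrite -!poch_recr e3 mulrAC divff // mul1r.
have e4 : poch ((m.+2)%:R + a + b + 1) p.+1 =
   poch ((m.+1)%:R + a + b + 1) p * ((m.+1)%:R + a + b + 1 + p%:R)
   * ((m.+1)%:R + a + b + 1 + p.+1%:R) / ((m.+1)%:R + a + b + 1).
  have e3 : poch ((m.+1)%:R + a + b + 1) p.+2 =
       ((m.+1)%:R + a + b + 1) * poch ((m.+2)%:R + a + b + 1) p.+1.
    rewrite poch_recl; congr (_ * poch _ _).
    by rewrite -[(m.+2)%:R]natr1; ring.
  have nz : (m.+1)%:R + a + b + 1 != 0.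
    by rewrite lt0r_neq0 // -natr1; lra.
  by rewrite -!poch_recr e3 mulrAC divff // mul1r.
have e5 : poch (m%:R + a + b + 1) p.+1 =
   (m%:R + a + b + 1) * poch ((m.+1)%:R + a + b + 1) p.
  rewrite poch_recl; congr (_ * poch _ _).
  by rewrite -[(m.+1)%:R]natr1; ring.
rewrite /hT e1 e2 e4 e5 !poch_recr factS natrM.
set X := poch (- (m.+1)%:R) p.
set Y := poch ((m.+1)%:R + a + b + 1) p.
set F := p`!%:R.
set PA := poch (a + 1) p.
set PN := poch (- N%:R) p.
have hF : F != 0 by rewrite /F pnatr_eq0 -lt0n fact_gt0.
have hPA : PA != 0.
  by apply: poch_neq0 => t _; rewrite lt0r_neq0 //; have := ler0n R t; lra.
have hPN : PN != 0.
  apply: poch_neq0 => t tp; rewrite addrC subr_eq0 eqr_nat; apply/eqP; lia.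
have hPN1 : - N%:R + p%:R != 0 :> R.
  rewrite addrC subr_eq0 eqr_nat; apply/eqP; lia.
have hNr : (m.+2)%:R <= N%:R :> R by rewrite ler_nat.
rewrite /hA /hC.
rewrite -!natr1 in hNr hPN1 *.
field.
have hF' : p`!%:R != 0 :> R := hF.
repeat (apply/andP; split); try done; apply: lt0r_neq0; lra.
Qed.
End Coef.


Arguments hT {R}. Arguments hA {R}. Arguments hC {R}.
Section Rec.
Variable R : realFieldType.

Lemma hahnQ_sum (a b x : R) N m M : (m < M)%N ->
  hahnQ m x a b N = \sum_(0 <= j < M) hT a b N m j * poch (- x) j.
Proof.
move=> hM; rewrite (big_cat_nat _ (n:=m.+1)) //=.
have -> : \sum_(m.+1 <= j < M) hT a b N m j * poch (- x) j = 0.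
  rewrite big_nat_cond big1 // => j /andP[/andP[hj _] _].
  by rewrite /hT poch_negnat // !mul0r.
rewrite addr0 big_mkord /hahnQ; apply: eq_bigr => j _; by rewrite /hT mulrAC.
Qed.

Lemma hahn_rec (a b x : R) N m : -1 < a -> -1 < b -> (m.+2 <= N)%N ->
  - x * hahnQ m.+1 x a b N =
  hA a b N m * hahnQ m.+2 x a b N - (hA a b N m + hC a b N m) * hahnQ m.+1 x a b N
  + hC a b N m * hahnQ m x a b N.
Proof.
move=> ha hb hN.
rewrite [in LHS](hahnQ_sum a b x N m.+1 m.+2) // mulr_sumr.
have step : \sum_(0 <= j < m.+2) - x * (hT a b N m.+1 j * poch (- x) j) =
   \sum_(0 <= j < m.+3) ((if j is p.+1 then hT a b N m.+1 p else 0)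
                          - j%:R * hT a b N m.+1 j) * poch (- x) j.
  transitivity (\sum_(0 <= j < m.+2) (hT a b N m.+1 j * poch (- x) j.+1
                     - j%:R * hT a b N m.+1 j * poch (- x) j)).
    by apply: eq_bigr => j _; rewrite poch_recr; ring.
  rewrite GRing.sumrB.
  under [RHS]eq_bigr do rewrite mulrBl.
  have z : hT a b N m.+1 m.+2 = 0 by rewrite /hT poch_negnat // !mul0r.
  rewrite GRing.sumrB; congr (_ - _).
    by rewrite [RHS]big_nat_recl //= mul0r add0r.
  by rewrite [RHS]big_nat_recr //= z mulr0 mul0r addr0.
rewrite step (hahnQ_sum a b x N m.+2 m.+3) // (hahnQ_sum a b x N m.+1 m.+3) //.
rewrite (hahnQ_sum a b x N m m.+3) 1?ltnW //.
rewrite !mulr_sumr -GRing.sumrB -big_split /=.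
apply: eq_big_nat => j /andP[_ hj].
rewrite coef_id //; try ring.

Qed.
End Rec.


Theorem theorem2 (R : realFieldType) (n k l : nat) (al be : R)
  (hal : -1 < al) (hbe : -1 < be) (hkl : (k + l <= n)%N)
  (h : nat) (hh1 : (k <= h)%N) (hh2 : (h <= n - l)%N) :
  let sigma := al + be + 1 in
  [/\ cc n k l al be (k + l) h = ('C(n, h)%:R)^-1 * 'C(n - k - l, h - k)%:R,
      (k + l + 1 <= n)%N ->
        cc n k l al be (k + l + 1) h =
        cc n k l al be (k + l) h
        * (al + 2 * l%:R + 1
           - (sigma + 2 * k%:R + 2 * l%:R + 1) * (l%:R + h%:R - n%:R)
             / (k%:R + l%:R - n%:R))
    & forall i : nat, (k + l + 2 <= i)%N -> (i <= n)%N ->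
        cc n k l al be i h =
        Ki n k l al be h i * cc n k l al be i.-1 h
        + Li n k l al be i * cc n k l al be i.-2 h].
Proof.
move=> sigma.
have ex : (n - l - h)%:R = n%:R - l%:R - h%:R :> R.
  rewrite natrB ?natrB //; lia.
have eN : (n - k - l)%:R = n%:R - k%:R - l%:R :> R.
  rewrite natrB ?natrB //; lia.
have hk0 : 0 <= k%:R :> R := ler0n _ _.
have hl0 : 0 <= l%:R :> R := ler0n _ _.
have hklr : k%:R + l%:R <= n%:R :> R by rewrite -natrD ler_nat.
have hkh : k%:R <= h%:R :> R by rewrite ler_nat.
have hhn : h%:R + l%:R <= n%:R :> R by rewrite -natrD ler_nat; lia.
have I1 : cc n k l al be (k + l) h = ('C(n, h)%:R)^-1 * 'C(n - k - l, h - k)%:R.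
  rewrite /cc (_ : (k + l - k - l = 0)%N); last by lia.
  rewrite poch0 fact0 /hahnQ big_ord1 /= !poch0 !mulr1 !mul1r invr1 !mul1r.
  by rewrite mulr1.
split => //.
  move=> hn1.
  rewrite I1 /cc (_ : (k + l + 1 - k - l = 1)%N); last by lia.
  rewrite /hahnQ big_ord_recr big_ord1 /= !poch_recr !poch0 !mul1r ex eN /sigma.
  have hnr : k%:R + l%:R + 1 <= n%:R :> R by rewrite [1]( _ : 1 = 1%:R) // -!natrD ler_nat.
  rewrite (_ : 1`!%:R = 1 :> R) //.
  set B1 := 'C(n, h)%:R; set B2 := 'C(n - k - l, h - k)%:R.
  have hB1 : B1 != 0 by rewrite /B1 pnatr_eq0 -lt0n bin_gt0; lia.
  clearbody B1 B2.
  field.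
  by repeat (apply/andP; split); try done; apply/eqP => E; lra.
  move=> i hi1 hi2.
have [m ei] : exists m, i = (m.+2 + k + l)%N by exists (i - k - l - 2)%N; lia.
subst i.
have hmN : (m.+2 <= n - k - l)%N by lia.
rewrite (_ : (m.+2 + k + l).-1 = m.+1 + k + l)%N; last by lia.
rewrite (_ : (m.+2 + k + l).-2 = m + k + l)%N; last by lia.
rewrite /cc (_ : (m.+2 + k + l - k - l = m.+2)%N); last by lia.
rewrite (_ : (m.+1 + k + l - k - l = m.+1)%N); last by lia.
rewrite (_ : (m + k + l - k - l = m)%N); last by lia.
have ha : -1 < al + 2 * l%:R by lra.
have hb : -1 < be + 2 * k%:R by lra.
have rec := @hahn_rec R _ _ (n - l - h)%:R _ _ ha hb hmN.
set Q2 := hahnQ m.+2 _ _ _ _ in rec *.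
set Q1 := hahnQ m.+1 _ _ _ _ in rec *.
set Q0 := hahnQ m _ _ _ _ in rec *.
have hm0 : 0 <= m%:R :> R := ler0n _ _.
have hmn : m%:R + 2 + k%:R + l%:R <= n%:R :> R.
  have : ((m.+2 + k + l)%:R <= n%:R :> R) by rewrite ler_nat.
  rewrite !natrD -!natr1 => H; lra.
have hA0 : hA (al + 2 * l%:R) (be + 2 * k%:R) (n - k - l) m != 0.
  rewrite /hA eN -!natr1.
  apply: mulf_neq0; [apply: mulf_neq0; [apply: mulf_neq0|]| rewrite invr_eq0; apply: mulf_neq0];
  apply/eqP => E; lra.
have eQ2 : Q2 = (- (n - l - h)%:R * Q1
   + (hA (al + 2 * l%:R) (be + 2 * k%:R) (n - k - l) m
      + hC (al + 2 * l%:R) (be + 2 * k%:R) (n - k - l) m) * Q1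
   - hC (al + 2 * l%:R) (be + 2 * k%:R) (n - k - l) m * Q0)
   / hA (al + 2 * l%:R) (be + 2 * k%:R) (n - k - l) m.
  by rewrite rec; field.
rewrite eQ2.
have hB1 : 'C(n, h)%:R != 0 :> R by rewrite pnatr_eq0 -lt0n bin_gt0; lia.
have hPA : poch (al + 2 * l%:R + 1) m != 0.
  by apply: poch_neq0 => t _; apply/eqP => E; have := ler0n R t; lra.
have hF : m`!%:R != 0 :> R by rewrite pnatr_eq0 -lt0n fact_gt0.
move: hA0 hB1 hF hPA.
rewrite /hA /hC /Ki /Li /Mi !poch2 !poch_recr !factS !natrM ex eN.
set B1 := 'C(n, h)%:R; set B2 := 'C(n - k - l, h - k)%:R.
set PA := poch (al + 2 * l%:R + 1) m; set F := m`!%:R.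
clearbody B1 B2 PA F Q0 Q1 Q2.
rewrite !natrD -!natr1 => hA0 hB1 hF hPA.
field.
by repeat (apply/andP; split); try done; apply/eqP => E; lra.
Qed.
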